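(* Fix $q\in[1,\infty)$ and let $(\mathcal X,d)$ be a metric space with the $q$-barycenter property (for every $\boldsymbol w\in\Delta^{K-1}$ and $\boldsymbol c\in\mathcal X^K$, $C\mapsto\sum_sw_sd^q(c_s,C)$ attains its minimum). Let $\boldsymbol a=(a_1,\dots,a_K)\in\mathcal X^K$, $\boldsymbol w\in\Delta^{K-1}$, $\alpha\in[0,1]$, and $C_{\boldsymbol a}\in\arg\min_C\sum_sw_sd^q(a_s,C)$. Assume $\boldsymbol b=(b_1,\dots,b_K)\in\mathcal X^K$ satisfies, for all $s$, $d(a_s,C_{\boldsymbol a})=d(a_s,b_s)+d(b_s,C_{\boldsymbol a})$ and $d(b_s,a_s)=(1-\alpha^{1/q})d(a_s,C_{\boldsymbol a})$. Let $C_{\boldsymbol b}\in\arg\min_C\sum_sw_sd^q(b_s,C)$. Then $$\Big\{\sum_{s=1}^Kw_sd^q(b_s,C_{\boldsymbol b})\Big\}^{1/q}=\Big\{\sum_{s=1}^Kw_sd^q(b_s,C_{\boldsymbol a})\Big\}^{1/q}.$$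
   Context: $\Delta^{K-1}$ is the probability simplex in $\mathbb R^K$. *)

(* Defs.v *)
From mathcomp Require Import all_boot all_order all_algebra.
From mathcomp Require Import all_classical all_reals all_analysis.
Set Implicit Arguments. Unset Strict Implicit. Unset Printing Implicit Defensive.
Import Order.TTheory GRing.Theory Num.Theory.
Local Open Scope ring_scope.

Definition is_metric (R : realType) (X : Type) (d : X -> X -> R) : Prop :=
  [/\ forall x y, 0 <= d x y,
      forall x y, d x y = 0 <-> x = y,
      forall x y, d x y = d y x &
      forall x y z, d x z <= d x y + d y z].

Definition in_simplex (R : realType) (K : nat) (w : 'I_K -> R) : Prop :=
  (forall s, 0 <= w s) /\ \sum_(s < K) w s = 1.

Definition qcost (R : realType) (X : Type) (d : X -> X -> R) (q : R)
  (K : nat) (w : 'I_K -> R) (c : 'I_K -> X) (C : X) : R :=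
  \sum_(s < K) w s * powR (d (c s) C) q.

Definition is_qbarycenter (R : realType) (X : Type) (d : X -> X -> R) (q : R)
  (K : nat) (w : 'I_K -> R) (c : 'I_K -> X) (C : X) : Prop :=
  forall C', qcost d q w c C <= qcost d q w c C'.

Definition qbarycenter_property (R : realType) (X : Type) (d : X -> X -> R)
  (q : R) (K : nat) : Prop :=
  forall (w : 'I_K -> R) (c : 'I_K -> X), in_simplex w ->
    exists C, is_qbarycenter d q w c C.

(* Main.v *)
Require Import Defs.
From mathcomp Require Import all_boot all_order all_algebra.
From mathcomp Require Import all_classical all_reals all_analysis.
From mathcomp Require Import ring lra.
Import Order.TTheory GRing.Theory Num.Theory.
Local Open Scope ring_scope.

Lemma cvx (R : realType) (t x y p : R) : 1 <= p -> 0 <= t -> t <= 1 -> 0 <= x -> 0 <= y ->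
  powR (t*x+(1-t)*y) p <= t * powR x p + (1-t) * powR y p.
Proof.
move=> p1 t0 t1 x0 y0.
have := @convex_powR R p p1 (Itv01 t0 t1) x y.
rewrite !inE /= !in_itv /= !andbT => /(_ x0 y0).
by rewrite /conv /=.
Qed.

Theorem lemma11 (R : realType) (X : Type) (d : X -> X -> R) (q : R) (K : nat)
  (hd : is_metric d) (hq : 1 <= q) (hbary : qbarycenter_property d q K)
  (a b : 'I_K -> X) (w : 'I_K -> R) (alpha : R) (Ca Cb : X)
  (hw : in_simplex w) (halpha : 0 <= alpha <= 1)
  (hCa : is_qbarycenter d q w a Ca)
  (hgeo : forall s, d (a s) Ca = d (a s) (b s) + d (b s) Ca)
  (hdist : forall s, d (b s) (a s) = (1 - powR alpha q^-1) * d (a s) Ca)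
  (hCb : is_qbarycenter d q w b Cb) :
  powR (qcost d q w b Cb) q^-1 = powR (qcost d q w b Ca) q^-1.
Proof.
congr powR.
case: hd => d0 _ dsym dtri.
case: hw => w0 _.
case/andP: halpha => a0 a1.
have q0 : 0 < q by apply: lt_le_trans hq.
set t := powR alpha q^-1.
have t0 : 0 <= t by apply: powR_ge0.
have t1 : t <= 1.
  have E1 : 1 = powR 1 q^-1 by rewrite powR1.
  rewrite /t [X in _ <= X]E1; apply: ge0_ler_powR => //; first by rewrite invr_ge0 ltW.
  by rewrite nnegrE.
have tq : powR t q = alpha by rewrite /t -powRrM mulVf ?gt_eqF // powRr1.
have hb : forall s, d (b s) Ca = t * d (a s) Ca.
  move=> s; have := hgeo s; rewrite -(dsym (b s)) hdist => h; apply: (addrI ((1 - t) * d (a s) Ca)); rewrite -h; ring.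
have EB : qcost d q w b Ca = alpha * qcost d q w a Ca.
  rewrite /qcost mulr_sumr; apply: eq_bigr => s _.
  by rewrite hb powRM // tq mulrCA.
apply/le_anti; rewrite hCb /= EB.
have [->|ap] := eqVneq alpha 0.
  by rewrite mul0r /qcost sumr_ge0 // => s _; rewrite mulr_ge0 // powR_ge0.
have tp : 0 < t by rewrite /t powR_gt0 // lt0r ap.
set e := fun s => d (b s) Cb.
have key : forall s, powR (d (a s) Cb) q <=
    (1 - t) * powR (d (a s) Ca) q + t * powR (e s / t) q.
  move=> s.
  have hc := @cvx R (1 - t) (d (a s) Ca) (e s / t) q hq.
  have E2 : 1 - (1 - t) = t by ring.
  rewrite E2 in hc.
  have ht1 : 0 <= 1 - t by rewrite subr_ge0.
  have ht2 : 1 - t <= 1 by rewrite lerBlDr lerDl.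
  have hes : 0 <= e s / t by rewrite divr_ge0 // ?(ltW tp) // /e d0.
  apply: (le_trans _ (hc ht1 ht2 (d0 _ _) hes)).
  apply: ge0_ler_powR; rewrite ?nnegrE ?(ltW q0) ?d0 //.
    by rewrite addr_ge0 // mulr_ge0 ?d0.
  rewrite [t * _]mulrC divfK ?gt_eqF //.
  by rewrite (le_trans (dtri _ (b s) _)) // -dsym hdist /e.
set S := \sum_(s < K) w s * powR (e s / t) q.
have H1 : qcost d q w a Ca <= (1 - t) * qcost d q w a Ca + t * S.
  apply: (le_trans (hCa Cb)).
  rewrite /qcost /S !mulr_sumr -big_split /=; apply: ler_sum => s _.
  rewrite mulrCA (mulrCA t) -mulrDr; apply: ler_wpM2l => //; exact: key.
have H2 : qcost d q w a Ca <= S.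
  have : t * qcost d q w a Ca <= t * S.
    by move: H1; rewrite mulrBl mul1r; lra.
  by rewrite ler_pM2l.
apply: le_trans (ler_wpM2l a0 H2) _.
rewrite /S /qcost mulr_sumr; apply: ler_sum => s _.
rewrite mulrCA -tq -powRM ?divr_ge0 ?(ltW tp) // ?/e ?d0 //. by rewrite [t * _]mulrC divfK ?gt_eqF.
Qed.
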